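(* Let $G$ be an infinite connected simple undirected graph with globally bounded vertex degree, $\deg(x)\le v<\infty$ for all vertices $x$, and suppose $G$ has internal scaling dimension $D$, i.e. $D_S(x)=D$ for every vertex $x$. Then the (unpurified) clique graph $G_{cl}$ also has internal scaling dimension $D$: for every clique $C$ of $G$, the limit $\lim_{n\to\infty}\ln(\#U^{cl}_n(C))/\ln n$ exists and equals $D$.
   Context: Graphs are simple and undirected with graph metric $d$ (minimal number of edges of a connecting path). For a vertex $x$, $U_n(x)=\{y:d(x,y)\le n\}$ and $D_n(x)=\ln(\#U_n(x))/\ln n$. The lower and upper internal scaling dimensions at $x$ are $\underline D_S(x)=\liminf_{n\to\infty}D_n(x)$ and $\overline D_S(x)=\limsup_{n\to\infty}D_n(x)$; if they coincide the common value is $D_S(x)$, and if $D_S(x)=D$ for all $x$ the graph has internal scaling dimension $D$. A clique is a maximal complete subgraph. The clique graph $G_{cl}$ has as vertices the cliques of $G$, two distinct cliques being adjacent iff they share at least one vertex; $U^{cl}_n(C)$ is the ball of radius $n$ around $C$ in the graph metric of $G_{cl}$. *)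

(* Defs.v *)
From Stdlib Require Import Reals List.
From Coquelicot Require Import Coquelicot.
Import ListNotations.
Set Implicit Arguments.

(* A graph on an arbitrary (possibly infinite) type T is given by an adjacency
   relation [adj]; vertices are identified up to an equivalence [eqv]
   ([eqv = eq] for ordinary graphs, extensional equality for cliques). *)

Fixpoint dist_le {T : Type} (eqv : T -> T -> Prop) (adj : T -> T -> Prop)
  (n : nat) (x y : T) : Prop :=
  match n with
  | O => eqv x y
  | S m => dist_le eqv adj m x y \/ exists z, dist_le eqv adj m x z /\ adj z y
  end.

Definition card_mod {T : Type} (eqv : T -> T -> Prop) (P : T -> Prop) (k : nat) : Prop :=
  exists l : list T,
    length l = k /\
    (forall a, In a l -> P a) /\
    (forall y, P y -> exists a, In a l /\ eqv a y) /\
    ForallOrdPairs (fun a b => ~ eqv a b) l.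

Definition simple_graph {V : Type} (adj : V -> V -> Prop) : Prop :=
  (forall x y, adj x y -> adj y x) /\ (forall x, ~ adj x x).

Definition infinite_type (V : Type) : Prop := ~ exists l : list V, forall x, In x l.

Definition connected {V : Type} (adj : V -> V -> Prop) : Prop :=
  forall x y : V, exists n, dist_le eq adj n x y.

Definition bounded_degree {V : Type} (adj : V -> V -> Prop) (v : nat) : Prop :=
  forall x, exists l : list V, (length l <= v)%nat /\ forall y, adj x y -> In y l.

Definition has_scaling_dim_at {T : Type} (eqv : T -> T -> Prop) (adj : T -> T -> Prop)
  (x : T) (D : R) : Prop :=
  exists c : nat -> nat,
    (forall n, card_mod eqv (dist_le eqv adj n x) (c n)) /\
    is_lim_seq (fun n => ln (INR (c n)) / ln (INR n)) (Finite D).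

Definition complete_set {V : Type} (adj : V -> V -> Prop) (C : V -> Prop) : Prop :=
  forall x y, C x -> C y -> x <> y -> adj x y.

Definition is_clique {V : Type} (adj : V -> V -> Prop) (C : V -> Prop) : Prop :=
  complete_set adj C /\
  (forall y, ~ C y -> exists x, C x /\ x <> y /\ ~ adj x y).

Definition set_eqv {V : Type} (C C' : V -> Prop) : Prop := forall x, C x <-> C' x.

Definition cl_adj {V : Type} (adj : V -> V -> Prop) (C C' : V -> Prop) : Prop :=
  is_clique adj C /\ is_clique adj C' /\ ~ set_eqv C C' /\ exists x, C x /\ C' x.

(* Main.v *)
Require Import Defs.
From Stdlib Require Import Reals List Lra Lia Classical ClassicalEpsilon.
From Coquelicot Require Import Coquelicot.
Import ListNotations.
Local Open Scope nat_scope.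

Lemma FOP_NoDup {T} (l : list T) : ForallOrdPairs (fun a b => ~ a = b) l -> NoDup l.
Proof.
  induction l as [|a l IH]; intro H. constructor.
  inversion H; subst. constructor; auto.
  intro Hin. rewrite Forall_forall in H2. apply (H2 a Hin). reflexivity.
Qed.

Section Generic.
Context {T : Type} (eqv : T -> T -> Prop)
  (Erefl : forall a, eqv a a) (Esym : forall a b, eqv a b -> eqv b a)
  (Etrans : forall a b c, eqv a b -> eqv b c -> eqv a c).

Lemma dedup (L : list T) : exists l,
  (forall a, In a l -> In a L) /\ (forall b, In b L -> exists a, In a l /\ eqv a b) /\
  ForallOrdPairs (fun a b => ~ eqv a b) l /\ length l <= length L.
Proof.
  induction L as [|b L0 IH]; [|rename L0 into L].
  - exists []. simpl. repeat split; try tauto. constructor. lia.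
  - destruct IH as (l & H1 & H2 & H3 & H4).
    destruct (classic (exists a, In a l /\ eqv a b)) as [[a [Ha Hab]]|Hn].
    + exists l. repeat split.
      * intros x Hx. right. auto.
      * intros x [<-|Hx]. exists a; auto. auto.
      * auto.
      * simpl; lia.
    + exists (b :: l). repeat split.
      * intros x [<-|Hx]. left; auto. right; auto.
      * intros x [<-|Hx]. exists b; split; [left|]; auto.
        destruct (H2 x Hx) as (a & Ha & Hax). exists a; split; [right|]; auto.
      * constructor; auto. rewrite Forall_forall. intros x Hx Hbx.
        apply Hn. exists x. split; auto.
      * simpl; lia.
Qed.

Lemma filterP (P : T -> Prop) (L : list T) :
  exists L', (forall a, In a L' -> In a L /\ P a) /\
    (forall a, In a L -> P a -> In a L') /\ length L' <= length L.
Proof.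
  induction L as [|b L0 IH]; [|rename L0 into L].
  - exists []. simpl. repeat split; try tauto; lia.
  - destruct IH as (L' & H1 & H2 & H3).
    destruct (classic (P b)) as [Hb|Hb].
    + exists (b :: L'). split; [|split].
      * intros a [<-|Ha]. split; [left|]; auto. split; [right|]; apply H1; auto.
      * intros a [<-|Ha] Hp. left; auto. right; auto.
      * simpl; lia.
    + exists L'. split; [|split].
      * intros a Ha. split; [right|]; apply H1; auto.
      * intros a [<-|Ha] Hp. contradiction. auto.
      * simpl; lia.
Qed.

Lemma card_from_cover (P : T -> Prop) (L : list T) :
  (forall a b, P a -> eqv a b -> P b) ->
  (forall y, P y -> exists b, In b L /\ eqv b y) ->
  exists k, k <= length L /\ card_mod eqv P k.
Proof.
  intros Hinv Hcov.
  destruct (filterP P L) as (L' & F1 & F2 & F3).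
  destruct (dedup L') as (l & D1 & D2 & D3 & D4).
  exists (length l). split. lia.
  exists l. repeat split; auto.
  - intros a Ha. apply F1. auto.
  - intros y Hy. destruct (Hcov y Hy) as (b & Hb & Hby).
    assert (Pb : P b) by (apply (Hinv y); auto).
    destruct (D2 b (F2 b Hb Pb)) as (a & Ha & Hab).
    exists a. split; auto. eapply Etrans; eauto.
Qed.

Lemma card_mod_ge1 (P : T -> Prop) k x : card_mod eqv P k -> P x -> 1 <= k.
Proof.
  intros (l & Hl & _ & Hc & _) Hx. destruct (Hc x Hx) as (a & Ha & _).
  destruct l. destruct Ha. simpl in Hl. lia.
Qed.
End Generic.

Lemma flat_map_len {A B} (f : A -> list B) (M : nat) (l : list A) :
  (forall a, In a l -> length (f a) <= M) -> length (flat_map f l) <= M * length l.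
Proof.
  induction l as [|a l IH]; intro H; simpl. lia.
  rewrite length_app.
  assert (length (flat_map f l) <= M * length l) by (apply IH; intros; apply H; right; auto).
  specialize (H a (or_introl eq_refl)).
  lia.
Qed.

Fixpoint subs {A} (l : list A) : list (list A) :=
  match l with [] => [[]] | a :: l => subs l ++ map (cons a) (subs l) end.

Lemma subs_len {A} (l : list A) : length (subs l) = 2 ^ length l.
Proof.
  induction l; simpl. auto. rewrite length_app, length_map, IHl. lia.
Qed.

Lemma subs_spec {A} (K : A -> Prop) (l : list A) :
  exists s, In s (subs l) /\ forall z, In z s <-> In z l /\ K z.
Proof.
  induction l as [|a l IH]; simpl.
  - exists []. split. auto. simpl; tauto.
  - destruct IH as (s & Hs & Hz). destruct (classic (K a)) as [Ha|Ha].
    + exists (a :: s). split. apply in_or_app. right. apply in_map. auto.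
      intro z. simpl. rewrite Hz. split.
      * intros [<-|H]; tauto.
      * intros [[<-|H] Hk]; tauto.
    + exists s. split. apply in_or_app; left; auto.
      intro z. rewrite Hz. split. tauto. intros [[<-|H] Hk]; tauto.
Qed.

Section G.
Context {V : Type} (adj : V -> V -> Prop) (Hsym : forall x y, adj x y -> adj y x).

Lemma se_refl (K : V -> Prop) : set_eqv K K. Proof. intro; tauto. Qed.
Lemma se_sym (K K' : V -> Prop) : set_eqv K K' -> set_eqv K' K.
Proof. intros H x; specialize (H x); tauto. Qed.
Lemma se_trans (K K' K'' : V -> Prop) : set_eqv K K' -> set_eqv K' K'' -> set_eqv K K''.
Proof. intros H H' x; specialize (H x); specialize (H' x); tauto. Qed.

Lemma clique_eqv K K' : is_clique adj K -> set_eqv K K' -> is_clique adj K'.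
Proof.
  intros [Hc Hm] He. split.
  - intros x y Hx Hy. apply Hc; apply He; auto.
  - intros y Hy. destruct (Hm y) as (x & Hx & H1 & H2).
    intro Hk; apply Hy, He; auto.
    exists x. repeat split; auto. apply He; auto.
Qed.

Lemma cl_adj_eqv Z K K' : cl_adj adj Z K -> set_eqv K K' -> cl_adj adj Z K'.
Proof.
  intros (H1 & H2 & H3 & x & Hx & Hx') He. split; [|split; [|split]]; auto.
  - eapply clique_eqv; eauto.
  - intro H; apply H3. eapply se_trans; eauto. apply se_sym; auto.
  - exists x. split; auto. apply He; auto.
Qed.

Lemma dist_cl_eqv n C K K' : dist_le set_eqv (cl_adj adj) n C K -> set_eqv K K' ->
  dist_le set_eqv (cl_adj adj) n C K'.
Proof.
  revert K K'. induction n; simpl; intros K K' H He.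
  - eapply se_trans; eauto.
  - destruct H as [H|(Z & HZ & Ha)].
    + left. eapply IHn; eauto.
    + right. exists Z. split; auto. eapply cl_adj_eqv; eauto.
Qed.

Lemma dist_cl_clique n C K : is_clique adj C -> dist_le set_eqv (cl_adj adj) n C K ->
  is_clique adj K.
Proof.
  revert K. induction n; simpl; intros K HC H.
  - eapply clique_eqv; eauto.
  - destruct H as [H|(Z & HZ & Ha)]. eapply IHn; eauto. apply Ha.
Qed.

Lemma greedy (l S : list V) : complete_set adj (fun z => In z S) ->
  exists S', complete_set adj (fun z => In z S') /\ incl S S' /\
    (forall y, In y l -> In y S' \/ exists s, In s S' /\ s <> y /\ ~ adj s y).
Proof.
  revert S. induction l as [|y l IH]; intros S HS.
  - exists S. split; auto. split. apply incl_refl. intros y [].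
  - destruct (classic (forall s, In s S -> s <> y -> adj s y)) as [Ha|Ha].
    + destruct (IH (y :: S)) as (S' & H1 & H2 & H3).
      * intros a b [<-|Ha'] [<-|Hb] Hab.
        -- contradiction.
        -- apply Hsym, Ha; auto.
        -- apply Ha; auto.
        -- apply HS; auto.
      * exists S'. split; auto. split. intros z Hz; apply H2; right; auto.
        intros z [<-|Hz]. left. apply H2; left; auto. auto.
    + destruct (IH S HS) as (S' & H1 & H2 & H3).
      exists S'. split; auto. split; auto.
      intros z [<-|Hz]; auto. right.
      apply not_all_ex_not in Ha. destruct Ha as (s & Hs).
      exists s. split. apply H2. tauto. tauto.
Qed.

Lemma edge_clique (nb : V -> list V) (Hnb : forall x y, adj x y -> In y (nb x)) a b :
  adj a b -> exists K, is_clique adj K /\ K a /\ K b.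
Proof.
  intro Hab.
  destruct (greedy (nb a) [a; b]) as (S' & H1 & H2 & H3).
  - intros x y [<-|[<-|[]]] [<-|[<-|[]]] Hxy; try contradiction; auto.
  - exists (fun z => In z S'). split; [split|split]; auto.
    + intros y Hy. destruct (classic (adj a y)) as [Hay|Hay].
      * destruct (H3 y (Hnb _ _ Hay)) as [Hy'|Hw]. contradiction. exact Hw.
      * exists a. split. apply H2; left; auto. split; auto.
        intro E; subst; apply Hy, H2; left; auto.
    + apply H2; left; auto.
    + apply H2; right; left; auto.
Qed.

Lemma clique_nonempty (u : V) K : is_clique adj K -> exists x, K x.
Proof.
  intros [_ Hm]. destruct (classic (K u)). eauto.
  destruct (Hm u H) as (x & Hx & _). eauto.
Qed.

Lemma clique_sub (nb : V -> list V) (Hnb : forall x y, adj x y -> In y (nb x)) K y z :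
  is_clique adj K -> K y -> K z -> In z (y :: nb y).
Proof.
  intros [Hc _] Hy Hz. destruct (classic (y = z)) as [E|E]. left; auto.
  right. apply Hnb. apply Hc; auto.
Qed.

Lemma dist_mono {T} (eqv : T -> T -> Prop) (r : T -> T -> Prop) n x y :
  dist_le eqv r n x y -> dist_le eqv r (S n) x y.
Proof. intro; left; auto. Qed.

Lemma cl_vertex_dist C x0 n K y : is_clique adj C -> C x0 ->
  dist_le set_eqv (cl_adj adj) n C K -> K y -> dist_le eq adj (S n) x0 y.
Proof.
  intros HC Hx0. revert K y. induction n; simpl; intros K y H Hy.
  - assert (Cy : C y) by (apply H; auto).
    destruct (classic (x0 = y)) as [E|E]. left; auto.
    right. exists x0. split; auto. apply HC; auto.
  - destruct H as [H|(Z & HZ & Ha)].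
    + left. eapply IHn; eauto.
    + destruct Ha as (_ & [Hc _] & _ & w & Zw & Kw).
      specialize (IHn Z w HZ Zw).
      destruct (classic (w = y)) as [E|E]. subst. left; auto.
      right. exists w. split; auto.
Qed.

Lemma vertex_in_cl (nb : V -> list V) (Hnb : forall x y, adj x y -> In y (nb x))
  C x0 n y : is_clique adj C -> C x0 -> dist_le eq adj n x0 y ->
  exists K, dist_le set_eqv (cl_adj adj) n C K /\ K y.
Proof.
  intros HC Hx0. revert y. induction n; simpl; intros y H.
  - subst. exists C. split; auto. apply se_refl.
  - destruct H as [H|(z & Hz & Ha)].
    + destruct (IHn y H) as (K & HK & Ky). exists K. split; [left; exact HK | exact Ky].
    + destruct (IHn z Hz) as (K & HK & Kz).
      destruct (edge_clique nb Hnb z y Ha) as (K' & HK' & K'z & K'y).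
      exists K'. split; auto.
      destruct (classic (set_eqv K K')) as [E|E].
      * left. eapply dist_cl_eqv; eauto.
      * right. exists K. split; auto. unfold cl_adj.
        split; [|split; [exact HK'|split; [exact E|]]]. apply (dist_cl_clique n C K HC HK).
        exists z; auto.
Qed.
End G.
Local Open Scope R_scope.
Lemma lim_lnn : is_lim_seq (fun n => ln (INR n)) p_infty.
Proof.
  eapply filterlim_comp. apply is_lim_seq_INR. apply is_lim_ln_p.
Qed.
Lemma lim_inv_lnn (A : R) : is_lim_seq (fun n => A / ln (INR n)) 0.
Proof.
  replace (Finite 0) with (Rbar_mult A 0) by (simpl; f_equal; ring).
  apply (is_lim_seq_scal_l (fun n => / ln (INR n)) A 0).
  replace (Finite 0) with (Rbar_inv p_infty) by reflexivity.
  apply is_lim_seq_inv. apply lim_lnn. discriminate.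
Qed.
Lemma ln_pos_n (n : nat) : (2 <= n)%nat -> 0 < ln (INR n).
Proof. intro H. rewrite <- ln_1. apply le_INR in H. simpl in H. apply ln_increasing; lra. Qed.

Lemma lim_ratio : is_lim_seq (fun n => ln (INR (S n)) / ln (INR n)) 1.
Proof.
  apply is_lim_seq_le_le_loc with (u := fun n => 1 + 0 / ln (INR n))
    (w := fun n => 1 + ln 2 / ln (INR n)).
  - exists 2%nat. intros n Hn. pose proof (ln_pos_n n Hn) as Hl.
    assert (Hn' : 2 <= INR n) by (apply le_INR in Hn; simpl in Hn; lra).
    assert (E: INR (S n) = INR n + 1) by (rewrite S_INR; ring).
    assert (H1 : ln (INR n) <= ln (INR (S n))) by (apply ln_le; lra).
    assert (H2 : ln (INR (S n)) <= ln 2 + ln (INR n)).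
    { rewrite <- ln_mult by lra. apply ln_le; lra. }
    split.
    + unfold Rdiv. rewrite Rmult_0_l, Rplus_0_r.
      apply (Rmult_le_reg_r (ln (INR n))); auto. rewrite Rmult_assoc, Rinv_l by lra. lra.
    + apply (Rmult_le_reg_r (ln (INR n))); auto. unfold Rdiv.
      rewrite Rmult_plus_distr_r, !Rmult_assoc, Rinv_l by lra. lra.
  - replace (Finite 1) with (Finite (1 + 0)) by (f_equal; ring).
    apply is_lim_seq_plus'. apply is_lim_seq_const. apply lim_inv_lnn.
  - replace (Finite 1) with (Finite (1 + 0)) by (f_equal; ring).
    apply is_lim_seq_plus'. apply is_lim_seq_const. apply lim_inv_lnn.
Qed.

Lemma squeeze (cl cx : nat -> nat) (M1 M2 : nat) (D : R) :
  (forall n, 1 <= cx n)%nat -> (forall n, cx n <= M1 * cl n)%nat ->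
  (forall n, cl n <= M2 * cx (S n))%nat ->
  is_lim_seq (fun n => ln (INR (cx n)) / ln (INR n)) D ->
  is_lim_seq (fun n => ln (INR (cl n)) / ln (INR n)) D.
Proof.
  intros H1 Hlo Hup HD.
  assert (Hcl : forall n, (1 <= cl n)%nat).
  { intro n. specialize (H1 n). specialize (Hlo n). destruct (cl n); lia. }
  assert (HM1 : (1 <= M1)%nat). { specialize (H1 0%nat). specialize (Hlo 0%nat). destruct M1; lia. }
  assert (HM2 : (1 <= M2)%nat). { specialize (Hcl 0%nat). specialize (Hup 0%nat). destruct M2; lia. }
  assert (Pos : forall k, (1 <= k)%nat -> 0 < INR k).
  { intros k Hk. apply lt_0_INR. lia. }
  apply is_lim_seq_le_le_loc with
    (u := fun n => ln (INR (cx n)) / ln (INR n) + (- ln (INR M1)) / ln (INR n))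
    (w := fun n => ln (INR M2) / ln (INR n) +
       (ln (INR (cx (S n))) / ln (INR (S n))) * (ln (INR (S n)) / ln (INR n))).
  - exists 2%nat. intros n Hn. pose proof (ln_pos_n n Hn) as Hl.
    assert (HlS : 0 < ln (INR (S n))) by (apply ln_pos_n; lia).
    assert (A1 : ln (INR (cx n)) <= ln (INR M1) + ln (INR (cl n))).
    { rewrite <- ln_mult by (apply Pos; auto). apply ln_le. apply Pos; auto.
      rewrite <- mult_INR. apply le_INR. auto. }
    assert (A2 : ln (INR (cl n)) <= ln (INR M2) + ln (INR (cx (S n)))).
    { rewrite <- ln_mult by (apply Pos; auto). apply ln_le. apply Pos; auto.
      rewrite <- mult_INR. apply le_INR. auto. }
    split.
    + apply (Rmult_le_reg_r (ln (INR n))); auto.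
      replace ((ln (INR (cx n)) / ln (INR n) + - ln (INR M1) / ln (INR n)) * ln (INR n))
        with (ln (INR (cx n)) - ln (INR M1)) by (field; lra).
      replace (ln (INR (cl n)) / ln (INR n) * ln (INR n)) with (ln (INR (cl n))) by (field; lra).
      lra.
    + apply (Rmult_le_reg_r (ln (INR n))); auto. unfold Rdiv.
      rewrite Rmult_plus_distr_r.
      replace (ln (INR (cx (S n))) * / ln (INR (S n)) * (ln (INR (S n)) * / ln (INR n)) * ln (INR n))
        with (ln (INR (cx (S n)))) by (field; lra).
      replace (ln (INR M2) * / ln (INR n) * ln (INR n)) with (ln (INR M2)) by (field; lra).
      replace (ln (INR (cl n)) * / ln (INR n) * ln (INR n)) with (ln (INR (cl n))) by (field; lra).
      lra.
  - replace (Finite D) with (Finite (D + 0)) by (f_equal; ring).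
    apply is_lim_seq_plus'. exact HD. apply lim_inv_lnn.
  - replace (Finite D) with (Finite (0 + D * 1)) by (f_equal; ring).
    apply is_lim_seq_plus'. apply lim_inv_lnn.
    apply is_lim_seq_mult'. 
    apply (is_lim_seq_incr_1 (fun n => ln (INR (cx n)) / ln (INR n))). exact HD.
    apply lim_ratio.
Qed.

Lemma dist_refl0 {T} (r : T -> T -> Prop) n x : dist_le eq r n x x.
Proof. induction n; simpl; auto. Qed.

Theorem mainTheorem4 (V : Type) (adj : V -> V -> Prop) (v : nat) (D : R) :
  simple_graph adj ->
  infinite_type V ->
  connected adj ->
  bounded_degree adj v ->
  (forall x : V, has_scaling_dim_at eq adj x D) ->
  forall C : V -> Prop, is_clique adj C ->
    has_scaling_dim_at set_eqv (cl_adj adj) C D.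
Proof.
  intros [Hsym Hirr] Hinf _ Hbd Hdim C HC.
  assert (Hu : exists u : V, True).
  { destruct (classic (exists u : V, True)) as [H|H]; auto. exfalso. apply Hinf.
    exists nil. intro x. apply H. eauto. }
  destruct Hu as [u _].
  assert (Hnbx : exists nb : V -> list V, forall x, (length (nb x) <= v)%nat /\
     forall y, adj x y -> In y (nb x)).
  { exists (fun x => proj1_sig (constructive_indefinite_description _ (Hbd x))). intro x.
    destruct (constructive_indefinite_description _ (Hbd x)) as [l Hl]. simpl. exact Hl. }
  destruct Hnbx as [nb Hnb].
  assert (Hnb2 : forall x y, adj x y -> In y (nb x)) by (intros; apply Hnb; auto).
  destruct (clique_nonempty adj u C HC) as [x0 Hx0].
  destruct (Hdim x0) as (cx & Hcx & Hlim).
  assert (Hex : forall n, exists k, (k <= 2 ^ (S v) * cx (S n))%nat /\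
     card_mod set_eqv (dist_le set_eqv (cl_adj adj) n C) k).
  { intro n. destruct (Hcx (S n)) as (lx & Hlen & Hin & Hcov & _).
    set (L := flat_map (fun y => map (fun s z => In z s) (subs (y :: nb y))) lx).
    destruct (card_from_cover set_eqv se_refl se_sym se_trans
       (dist_le set_eqv (cl_adj adj) n C) L) as (k & Hk & Hcard).
    - intros a b Ha Hab. eapply dist_cl_eqv; eauto.
    - intros K HK. assert (HKc : is_clique adj K) by (eapply dist_cl_clique; eauto).
      destruct (clique_nonempty adj u K HKc) as [y Hy].
      assert (Hdy := cl_vertex_dist adj Hsym C x0 n K y HC Hx0 HK Hy).
      destruct (Hcov y Hdy) as (a & Ha & <-).
      destruct (subs_spec K (a :: nb a)) as (s & Hs & Hsz).
      exists (fun z => In z s). split.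
      + unfold L. apply in_flat_map. exists a. split; auto. exact (in_map (fun (s0 : list V) (z : V) => In z s0) _ _ Hs).
      + intro z. rewrite Hsz. split. tauto. intro Kz. split; auto.
        eapply clique_sub; eauto.
    - exists k. split; auto. eapply Nat.le_trans; [exact Hk|].
      rewrite <- Hlen. unfold L. apply flat_map_len. intros a _.
      rewrite length_map, subs_len. simpl length. apply Nat.pow_le_mono_r. lia.
      specialize (Hnb a). lia. }
  set (cl := fun n => proj1_sig (constructive_indefinite_description _ (Hex n))).
  assert (Hcl : forall n, (cl n <= 2 ^ (S v) * cx (S n))%nat /\
     card_mod set_eqv (dist_le set_eqv (cl_adj adj) n C) (cl n)).
  { intro n. unfold cl. destruct (constructive_indefinite_description _ (Hex n)) as [k Hk].
    simpl. exact Hk. }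
  exists cl. split. intro n; apply Hcl.
  assert (Hg : forall K : V -> Prop, exists l : list V, (length l <= S v)%nat /\
     (is_clique adj K -> forall z, K z -> In z l)).
  { intro K. destruct (classic (is_clique adj K)) as [HK|HK].
    - destruct (clique_nonempty adj u K HK) as [w Hw]. exists (w :: nb w). split.
      simpl. specialize (Hnb w). lia. intros _ z Hz. eapply clique_sub; eauto.
    - exists nil. split. simpl; lia. tauto. }
  set (g := fun K => proj1_sig (constructive_indefinite_description _ (Hg K))).
  assert (Hgs : forall K, (length (g K) <= S v)%nat /\
     (is_clique adj K -> forall z, K z -> In z (g K))).
  { intro K. unfold g. destruct (constructive_indefinite_description _ (Hg K)) as [l Hl].
    simpl. exact Hl. }
  apply (squeeze cl cx (S v) (2 ^ (S v)) D).
  - intro n. apply (card_mod_ge1 eq (dist_le eq adj n x0) (cx n) x0). apply Hcx.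
    apply dist_refl0.
  - intro n. destruct (Hcx n) as (lx & Hlen & Hin & _ & Hnd).
    destruct (Hcl n) as [_ (lc & Hlc & Hinc & Hcovc & _)].
    rewrite <- Hlen, <- Hlc.
    eapply Nat.le_trans; [|apply (flat_map_len g (S v) lc); intros; apply Hgs].
    apply NoDup_incl_length. apply FOP_NoDup; auto.
    intros y Hy. destruct (vertex_in_cl adj Hsym nb Hnb2 C x0 n y HC Hx0 (Hin y Hy))
      as (K & HK & Ky).
    destruct (Hcovc K HK) as (a & Ha & Hae).
    apply in_flat_map. exists a. split; auto. apply Hgs.
    eapply dist_cl_clique; eauto. apply Hae; auto.
  - intro n. apply Hcl.
  - exact Hlim.
Qed.
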